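(* In the model of the context, fix a time $t$ and suppose $\rho_\varepsilon(t,\cdot)$ is smooth with $|\rho_e(t,r)|<1$ for all $r$. Then $j_\varepsilon(t,\cdot)\equiv0$ if and only if both standard potentials $\Omega_E^1(t,\cdot)$ and $\Omega_E^2(t,\cdot)$ are constant in $r$. In that case, for any reference point $r_0\in\mathbb{R}$ and all $r\in\mathbb{R}$, $$\Omega_e^1(t,r)=\Omega_e^1(t,r_0)\,\overline{\Delta}(r),\qquad \Omega_e^2(t,r)=\big(\Omega_e^2(t,r_0)-\overline{B}(r)\,\Omega_e^1(t,r_0)\big)\,\overline{\Delta}(r),$$ where $\overline{B}(r)=(B(r)-B(r_0))/B_d$ and $\overline{\Delta}(r)=\Delta(r)/\Delta(r_0)$; the corresponding densities are given by $\rho_{e,i}=-\Omega_e^i\tanh(|\Omega_e|)/|\Omega_e|$ (and $\rho_e=0$ where $\Omega_e=0$), and such a state is stationary ($\partial_t\rho_\varepsilon=0$). In particular, if $\Delta$ is constant then $\Omega_e^1$ is constant in $r$.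
   Context: Model setup. Fix constants $\mu>0$, $B_d>0$, $\Gamma>0$, and smooth functions $B:\mathbb{R}\to\mathbb{R}$ (external field) and $\Delta:\mathbb{R}\to(0,\infty)$ (spin density). The state is given by smooth standard components $\rho_\varepsilon(t,r)=(\rho_{\varepsilon,1},\rho_{\varepsilon,2})$. Polarization-basis components are $\rho_e=P(r)\rho_\varepsilon$ with $P(r)=\frac{1}{\mu\Delta(r)}\begin{pmatrix}1/B_d & B(r)/B_d\\ 0&1\end{pmatrix}$. With $\sigma(p)=\tfrac12\ln4+\tfrac12(p-1)\ln(1-p)-\tfrac12(p+1)\ln(1+p)$ on $[0,1)$, the entropy density is $s=\sigma(|\rho_e|)$ (Euclidean norm) on $|\rho_e|<1$. Standard potentials: $\Omega_E^i=\partial s/\partial\rho_{\varepsilon,i}$; polarization potentials: $\Omega_e^i=\partial s/\partial\rho_{e,i}$ (so $\Omega_E=P^T\Omega_e$). With $H_\varepsilon$ the negative definite Hessian of $s$ with respect to $\rho_\varepsilon$, the current is $j_\varepsilon=-\Gamma H_\varepsilon^{-1}\partial_r\Omega_E$ and the dynamics are $\partial_t\rho_\varepsilon=-\partial_r j_\varepsilon$. *)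

(* Defs.v *)
From Stdlib Require Import Reals Lra ClassicalEpsilon.
Open Scope R_scope.

(* Total derivative operator: the derivative of f at x whenever it exists
   (chosen by Hilbert epsilon; unspecified otherwise). *)
Definition deriv (f : R -> R) (x : R) : R :=
  epsilon (inhabits 0) (fun l => derivable_pt_lim f x l).

Definition smooth (f : R -> R) : Prop :=
  exists D : nat -> R -> R, D O = f /\
    forall (n : nat) (x : R), derivable_pt_lim (D n) x (D (S n) x).

Definition sigma (p : R) : R :=
  / 2 * ln 4 + / 2 * (p - 1) * ln (1 - p) - / 2 * (p + 1) * ln (1 + p).

(* Polarization-basis components rho_e = P(r) rho_eps, with
   P(r) = 1/(mu Delta(r)) [[1/Bd, B(r)/Bd],[0,1]] *)
Definition rhoE1 (mu Bd : R) (B Delta : R -> R) (r x1 x2 : R) : R :=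
  / (mu * Delta r) * (/ Bd * x1 + B r / Bd * x2).
Definition rhoE2 (mu Bd : R) (B Delta : R -> R) (r x1 x2 : R) : R :=
  / (mu * Delta r) * x2.

Definition norm2 (y1 y2 : R) : R := sqrt (y1 ^ 2 + y2 ^ 2).

Definition s_pol (y1 y2 : R) : R := sigma (norm2 y1 y2).

Definition s_std (mu Bd : R) (B Delta : R -> R) (r x1 x2 : R) : R :=
  s_pol (rhoE1 mu Bd B Delta r x1 x2) (rhoE2 mu Bd B Delta r x1 x2).

Definition Ome1 (y1 y2 : R) : R := deriv (fun z => s_pol z y2) y1.
Definition Ome2 (y1 y2 : R) : R := deriv (fun z => s_pol y1 z) y2.

Definition OmE1 mu Bd B Delta (r x1 x2 : R) : R :=
  deriv (fun z => s_std mu Bd B Delta r z x2) x1.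
Definition OmE2 mu Bd B Delta (r x1 x2 : R) : R :=
  deriv (fun z => s_std mu Bd B Delta r x1 z) x2.

Definition H11 mu Bd B Delta (r x1 x2 : R) : R :=
  deriv (fun z => OmE1 mu Bd B Delta r z x2) x1.
Definition H12 mu Bd B Delta (r x1 x2 : R) : R :=
  deriv (fun z => OmE1 mu Bd B Delta r x1 z) x2.
Definition H21 mu Bd B Delta (r x1 x2 : R) : R :=
  deriv (fun z => OmE2 mu Bd B Delta r z x2) x1.
Definition H22 mu Bd B Delta (r x1 x2 : R) : R :=
  deriv (fun z => OmE2 mu Bd B Delta r x1 z) x2.

Section State.
Variables (mu Bd Gam : R) (B Delta : R -> R) (rho1 rho2 : R -> R -> R) (t : R).

Definition re1 (r : R) : R := rhoE1 mu Bd B Delta r (rho1 t r) (rho2 t r).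
Definition re2 (r : R) : R := rhoE2 mu Bd B Delta r (rho1 t r) (rho2 t r).

Definition OE1 (r : R) : R := OmE1 mu Bd B Delta r (rho1 t r) (rho2 t r).
Definition OE2 (r : R) : R := OmE2 mu Bd B Delta r (rho1 t r) (rho2 t r).

Definition Oe1 (r : R) : R := Ome1 (re1 r) (re2 r).
Definition Oe2 (r : R) : R := Ome2 (re1 r) (re2 r).

Definition h11 (r : R) : R := H11 mu Bd B Delta r (rho1 t r) (rho2 t r).
Definition h12 (r : R) : R := H12 mu Bd B Delta r (rho1 t r) (rho2 t r).
Definition h21 (r : R) : R := H21 mu Bd B Delta r (rho1 t r) (rho2 t r).
Definition h22 (r : R) : R := H22 mu Bd B Delta r (rho1 t r) (rho2 t r).
Definition hdet (r : R) : R := h11 r * h22 r - h12 r * h21 r.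

(* current j_eps = - Gamma H_eps^{-1} d_r Omega_E *)
Definition j1 (r : R) : R :=
  - Gam * (/ hdet r * (h22 r * deriv OE1 r - h12 r * deriv OE2 r)).
Definition j2 (r : R) : R :=
  - Gam * (/ hdet r * (- h21 r * deriv OE1 r + h11 r * deriv OE2 r)).
End State.

(* Main.v *)
From Stdlib Require Import Reals ClassicalEpsilon Lra.
From Coquelicot Require Import Coquelicot.
Require Import Defs.
Open Scope R_scope.


Definition cF (k : nat) : R := / (2 * INR k + 1).
Definition FF (q : R) : R := PSeries cF q.
Definition Fd (q : R) : R := PSeries (PS_derive cF) q.
Definition dS (k : nat) : R :=
  match k with O => ln 2 | S n => - / (2 * INR (S n) * (2 * INR n + 1)) end.
Definition St (q : R) : R := PSeries dS q.

Lemma radius_ge1 (a : nat -> R) : (forall n, Rabs (a n) <= 1) ->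
  forall q, Rabs q < 1 -> Rbar_lt (Rabs q) (CV_radius a).
Proof.
  intros Ha q Hq.
  destruct (CV_radius_bounded a) as [Hub _].
  assert (H1 : Rbar_le (Finite 1) (CV_radius a)).
  { apply Hub. exists 1. intro n. rewrite pow1, Rmult_1_r. apply Ha. }
  eapply Rbar_lt_le_trans; [|exact H1]. simpl. exact Hq.
Qed.

Lemma cF_bound n : Rabs (cF n) <= 1.
Proof.
  unfold cF. pose proof (pos_INR n).
  rewrite Rabs_pos_eq by (left; apply Rinv_0_lt_compat; lra).
  rewrite <- Rinv_1. apply Rinv_le_contravar; lra.
Qed.

Lemma rad_cF q : Rabs q < 1 -> Rbar_lt (Rabs q) (CV_radius cF).
Proof. apply radius_ge1, cF_bound. Qed.

Lemma PSd_dS n : PS_derive dS n = - / 2 * cF n.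
Proof.
  unfold PS_derive, dS, cF. rewrite S_INR. pose proof (pos_INR n). field. lra.
Qed.

Lemma rad_dS q : Rabs q < 1 -> Rbar_lt (Rabs q) (CV_radius dS).
Proof.
  intro Hq. rewrite <- CV_radius_derive. apply radius_ge1; auto.
  intro n. rewrite PSd_dS, Rabs_mult. pose proof (cF_bound n).
  rewrite Rabs_Ropp, Rabs_pos_eq by lra.
  pose proof (Rabs_pos (cF n)). nra.
Qed.

Lemma FF_der q : Rabs q < 1 -> is_derive FF q (Fd q).
Proof. intro Hq. apply is_derive_PSeries. now apply rad_cF. Qed.

Lemma St_der q : Rabs q < 1 -> is_derive St q (- / 2 * FF q).
Proof.
  intro Hq. unfold St. replace (- / 2 * FF q) with (PSeries (PS_derive dS) q).
  apply is_derive_PSeries. now apply rad_dS.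
  unfold FF. rewrite <- PSeries_scal. apply PSeries_ext. intro n. rewrite PSd_dS. reflexivity.
Qed.

Lemma FF_id q : Rabs q < 1 -> FF q + 2 * q * Fd q = / (1 - q).
Proof.
  intro Hq. unfold FF, Fd.
  rewrite Rmult_assoc, <- (PSeries_incr_1 (PS_derive cF)), <- PSeries_scal.
  rewrite <- PSeries_plus.
  2: { apply CV_radius_inside. now apply rad_cF. }
  2: { apply CV_radius_inside. rewrite CV_radius_scal by lra.
       rewrite CV_radius_incr_1, CV_radius_derive. now apply rad_cF. }
  rewrite (PSeries_ext _ (fun _ => 1)).
  - apply is_pseries_unique. apply is_pseries_R.
    eapply is_series_ext; [|apply is_series_geom; exact Hq].
    intro n. simpl. ring.
  - intro n. unfold PS_plus, PS_scal, PS_incr_1, PS_derive, cF.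
    destruct n as [|m].
    + simpl. unfold plus, scal, zero; simpl. unfold mult; simpl. field.
    + unfold plus, scal; cbn -[INR]. unfold mult; cbn -[INR].
      pose proof (pos_INR (S m)). field. lra.
Qed.


Lemma sq_lt1 c : -1 < c < 1 -> Rabs (c * (c * 1)) < 1.
Proof. intro. rewrite Rabs_pos_eq by nra. nra. Qed.

Lemma L_der c : -1 < c < 1 ->
  is_derive (fun p => p * FF (p ^ 2) - / 2 * (ln (1 + p) - ln (1 - p))) c 0.
Proof.
  intro Hc. auto_derive.
  - repeat split; try lra. exists (Fd (c*(c*1))). apply FF_der. now apply sq_lt1.
  - replace (Derive (fun x => FF x) (c*(c*1))) with (Fd (c*(c*1)))
      by (symmetry; apply is_derive_unique; apply FF_der; now apply sq_lt1).
    pose proof (FF_id _ (sq_lt1 c Hc)) as E.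
    replace (FF (c * (c * 1))) with (/ (1 - c * (c * 1)) - 2 * (c * (c * 1)) * Fd (c * (c * 1))) by lra.
    field. repeat split; nra.
Qed.

Lemma L4 p : 0 <= p < 1 -> p * FF (p ^ 2) = / 2 * (ln (1 + p) - ln (1 - p)).
Proof.
  intro Hp.
  set (L := fun p => p * FF (p ^ 2) - / 2 * (ln (1 + p) - ln (1 - p))).
  assert (L0 : L 0 = 0).
  { unfold L. rewrite Rplus_0_r, Rminus_0_r, ln_1. ring. }
  assert (Lp : L p = 0).
  { destruct (Req_dec p 0) as [->|Hp0]; [exact L0|].
    destruct (MVT_cor2 L (fun _ => 0) 0 p) as [c [Hc _]]; [lra| |].
    - intros c Hc. apply is_derive_Reals. apply L_der. lra.
    - lra. }
  unfold L in Lp. lra.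
Qed.

Lemma K_der c : 0 <= c < 1 ->
  is_derive (fun p => St (p ^ 2) - sigma p) c 0.
Proof.
  intro Hc. unfold sigma. auto_derive.
  - repeat split; try lra. exists (- / 2 * FF (c*(c*1))). apply St_der. apply sq_lt1; lra.
  - replace (Derive (fun x => St x) (c*(c*1))) with (- / 2 * FF (c*(c*1)))
      by (symmetry; apply is_derive_unique; apply St_der; apply sq_lt1; lra).
    pose proof (L4 c Hc) as E. replace (c ^ 2) with (c * (c * 1)) in E by ring.
    replace (ln (1 + - c)) with (ln (1 - c)) by (f_equal; ring).
    assert (1 + - c <> 0) by lra. assert (1 + c <> 0) by lra.
    field_simplify; try lra.
    rewrite <- (Rmult_0_l (/ (-2*c^2+2))). unfold Rdiv. f_equal.
    transitivity ((c^2-1)*(2*(c*FF (c * (c * 1))) - (ln(1+c) - ln(1-c)))); [ring|].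
    rewrite E. field.
Qed.

Lemma L5 q : 0 <= q < 1 -> St q = sigma (sqrt q).
Proof.
  intro Hq. set (p := sqrt q).
  assert (Hp : 0 <= p < 1).
  { split. apply sqrt_pos. unfold p. rewrite <- sqrt_1. apply sqrt_lt_1; lra. }
  assert (Hpq : p ^ 2 = q) by (unfold p; apply pow2_sqrt; lra).
  set (K := fun p => St (p ^ 2) - sigma p).
  assert (K0 : K 0 = 0).
  { unfold K, sigma, St. replace (0 ^ 2) with 0 by ring. rewrite PSeries_0.
    simpl. rewrite Rminus_0_r, Rplus_0_r, ln_1.
    replace 4 with (2 * 2) by ring. rewrite ln_mult by lra. field. }
  assert (Kp : K p = 0).
  { destruct (Req_dec p 0) as [->|Hp0]; [exact K0|].
    destruct (MVT_cor2 K (fun _ => 0) 0 p) as [c [Hc _]]; [lra| |].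
    - intros c Hc. apply is_derive_Reals. apply K_der. lra.
    - lra. }
  unfold K in Kp. rewrite Hpq in Kp. lra.
Qed.

Lemma FF0 : FF 0 = 1.
Proof. unfold FF. rewrite PSeries_0. unfold cF. simpl. field. Qed.

Lemma L6 q : 0 <= q < 1 -> 0 < FF q.
Proof.
  intro Hq. destruct (Req_dec q 0) as [->|Hq0]. rewrite FF0; lra.
  set (p := sqrt q).
  assert (Hp : 0 < p < 1).
  { split. apply sqrt_lt_R0; lra. unfold p. rewrite <- sqrt_1. apply sqrt_lt_1; lra. }
  assert (Hpq : p ^ 2 = q) by (unfold p; apply pow2_sqrt; lra).
  pose proof (L4 p ltac:(lra)) as E. rewrite Hpq in E.
  assert (ln (1 - p) < ln (1 + p)) by (apply ln_increasing; lra).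
  apply (Rmult_lt_reg_l p); lra.
Qed.

Lemma tanh_artanh p : -1 < p < 1 -> tanh (/ 2 * (ln (1 + p) - ln (1 - p))) = p.
Proof.
  intro Hp. unfold tanh, sinh, cosh.
  set (x := / 2 * (ln (1 + p) - ln (1 - p))).
  assert (E2 : exp x * exp x = (1 + p) / (1 - p)).
  { rewrite <- exp_plus. replace (x + x) with (ln (1 + p) + - ln (1 - p)) by (unfold x; field).
    rewrite exp_plus, exp_Ropp, !exp_ln by lra. field. lra. }
  rewrite exp_Ropp. pose proof (exp_pos x).
  replace ((exp x - / exp x) / 2 / ((exp x + / exp x) / 2))
    with ((exp x * exp x - 1) / (exp x * exp x + 1)) by (field; split; nra).
  rewrite E2. field. lra.
Qed.


Lemma deriv_eq f x l : derivable_pt_lim f x l -> deriv f x = l.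
Proof.
  intro H. unfold deriv.
  assert (Ex : exists l, derivable_pt_lim f x l) by (exists l; exact H).
  pose proof (epsilon_spec (inhabits 0) _ Ex) as H2.
  eapply uniqueness_limite; eassumption.
Qed.

Lemma deriv_spec f x : (exists l, derivable_pt_lim f x l) -> derivable_pt_lim f x (deriv f x).
Proof. intro Ex. unfold deriv. apply (epsilon_spec (inhabits 0) _ Ex). Qed.

Lemma nbhd_lt1 (q : R -> R) z0 : continuity_pt q z0 -> q z0 < 1 ->
  exists d, 0 < d /\ forall z, z0 - d < z < z0 + d -> q z < 1.
Proof.
  intros Hc Hq.
  unfold continuity_pt, continue_in, limit1_in, limit_in in Hc. simpl in Hc.
  destruct (Hc (1 - q z0)) as [a [Ha Hx]]; [lra|].
  exists a. split; [exact Ha|]. intros z Hz.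
  destruct (Req_dec z z0) as [->|Hne]; [exact Hq|].
  assert (D : R_dist (q z) (q z0) < 1 - q z0).
  { apply Hx. split. split; [exact I|auto]. unfold R_dist. apply Rabs_def1; lra. }
  unfold R_dist in D. apply Rabs_def2 in D. lra.
Qed.

Lemma ex_from_lim f x l : derivable_pt_lim f x l -> ex_derive f x.
Proof. intro H. exists l. now apply is_derive_Reals. Qed.

Lemma key (u v : R -> R) u' v' z0 :
  derivable_pt_lim u z0 u' -> derivable_pt_lim v z0 v' -> u z0 ^ 2 + v z0 ^ 2 < 1 ->
  derivable_pt_lim (fun z => s_pol (u z) (v z)) z0
    (- FF (u z0 ^ 2 + v z0 ^ 2) * (u z0 * u' + v z0 * v')).
Proof.
  intros Hu Hv HQ.
  set (q := fun z => u z ^ 2 + v z ^ 2).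
  assert (Dq : is_derive q z0 (2 * u z0 * u' + 2 * v z0 * v')).
  { unfold q. auto_derive.
    - repeat split; eapply ex_from_lim; eassumption.
    - replace (Derive (fun x => u x) z0) with u'
        by (symmetry; apply is_derive_unique; now apply is_derive_Reals).
      replace (Derive (fun x => v x) z0) with v'
        by (symmetry; apply is_derive_unique; now apply is_derive_Reals). ring. }
  assert (Cq : continuity_pt q z0).
  { apply derivable_continuous_pt. apply ex_derive_Reals_0. eexists; exact Dq. }
  destruct (nbhd_lt1 q z0 Cq HQ) as [d [Hd Hn]].
  apply derivable_pt_lim_locally_ext with (f := fun z => St (q z)) (a := z0 - d) (b := z0 + d).
  - lra.
  - intros z Hz. unfold s_pol, norm2. fold (q z). rewrite L5; [reflexivity|].
    split; [unfold q; nra | apply Hn; exact Hz].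
  - apply is_derive_Reals.
    assert (HQ' : Rabs (q z0) < 1) by (rewrite Rabs_pos_eq by (unfold q; nra); exact HQ).
    eapply is_derive_ext. { intro z. reflexivity. }
    replace (- FF (u z0 ^ 2 + v z0 ^ 2) * (u z0 * u' + v z0 * v'))
      with ((2 * u z0 * u' + 2 * v z0 * v') * (- / 2 * FF (q z0))) by (unfold q; field).
    apply (is_derive_comp St q z0 _ _ (St_der _ HQ') Dq).
Qed.


Lemma hess_gen (g u v : R -> R) u' v' a b z0 :
  (forall z, derivable_pt_lim u z u') -> (forall z, derivable_pt_lim v z v') ->
  (forall z, u z ^ 2 + v z ^ 2 < 1 -> g z = - FF (u z ^ 2 + v z ^ 2) * (u z * a + v z * b)) ->
  u z0 ^ 2 + v z0 ^ 2 < 1 ->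
  deriv g z0 = - (Fd (u z0 ^ 2 + v z0 ^ 2) * (2 * u z0 * u' + 2 * v z0 * v') * (u z0 * a + v z0 * b)
                  + FF (u z0 ^ 2 + v z0 ^ 2) * (u' * a + v' * b)).
Proof.
  intros Hu Hv Hg HQ. apply deriv_eq.
  set (q := fun z => u z ^ 2 + v z ^ 2).
  assert (Dq : is_derive q z0 (2 * u z0 * u' + 2 * v z0 * v')).
  { unfold q. auto_derive.
    - repeat split; eapply ex_from_lim; eauto.
    - replace (Derive (fun x => u x) z0) with u'
        by (symmetry; apply is_derive_unique; now apply is_derive_Reals).
      replace (Derive (fun x => v x) z0) with v'
        by (symmetry; apply is_derive_unique; now apply is_derive_Reals). ring. }
  assert (Cq : continuity_pt q z0).
  { apply derivable_continuous_pt. apply ex_derive_Reals_0. eexists; exact Dq. }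
  destruct (nbhd_lt1 q z0 Cq HQ) as [d [Hd Hn]].
  apply derivable_pt_lim_locally_ext with
    (f := fun z => - FF (u z ^ 2 + v z ^ 2) * (u z * a + v z * b)) (a := z0 - d) (b := z0 + d).
  - lra.
  - intros z Hz. symmetry. apply Hg. apply Hn. exact Hz.
  - apply is_derive_Reals.
    assert (HQ' : Rabs (u z0 * (u z0 * 1) + v z0 * (v z0 * 1)) < 1)
      by (rewrite Rabs_pos_eq by nra; simpl in HQ; nra).
    assert (FFex : ex_derive (fun x => FF x) (u z0 * (u z0 * 1) + v z0 * (v z0 * 1)))
      by (eexists; apply (FF_der _ HQ')).
    assert (uex : ex_derive (fun x => u x) z0) by (eapply ex_from_lim; eauto).
    assert (vex : ex_derive (fun x => v x) z0) by (eapply ex_from_lim; eauto).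
    auto_derive.
    + tauto.
    + replace (Derive (fun x => u x) z0) with u'
        by (symmetry; apply is_derive_unique; now apply is_derive_Reals).
      replace (Derive (fun x => v x) z0) with v'
        by (symmetry; apply is_derive_unique; now apply is_derive_Reals).
      replace (Derive (fun x => FF x) (u z0 * (u z0 * 1) + v z0 * (v z0 * 1)))
        with (Fd (u z0 * (u z0 * 1) + v z0 * (v z0 * 1)))
        by (symmetry; apply is_derive_unique; apply FF_der; exact HQ').
      replace (u z0 * (u z0 * 1) + v z0 * (v z0 * 1)) with (u z0 ^ 2 + v z0 ^ 2) by ring.
      ring.
Qed.

Section Model.
Variables (mu Bd : R) (B Delta : R -> R).

Definition pp1 r := / (mu * Delta r) * / Bd.
Definition pp12 r := / (mu * Delta r) * (B r / Bd).
Definition pp2 r := / (mu * Delta r).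
Definition QQ r x1 x2 := rhoE1 mu Bd B Delta r x1 x2 ^ 2 + rhoE2 mu Bd B Delta r x1 x2 ^ 2.

Lemma d_r1_1 r x2 z : derivable_pt_lim (fun z => rhoE1 mu Bd B Delta r z x2) z (pp1 r).
Proof. apply is_derive_Reals. unfold rhoE1, pp1. auto_derive; auto; unfold Rdiv; ring. Qed.
Lemma d_r1_2 r x1 z : derivable_pt_lim (fun z => rhoE1 mu Bd B Delta r x1 z) z (pp12 r).
Proof. apply is_derive_Reals. unfold rhoE1, pp12. auto_derive; auto; unfold Rdiv; ring. Qed.
Lemma d_r2_1 r x2 z : derivable_pt_lim (fun z => rhoE2 mu Bd B Delta r z x2) z 0.
Proof. apply is_derive_Reals. unfold rhoE2. auto_derive; auto; unfold Rdiv; ring. Qed.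
Lemma d_r2_2 r x1 z : derivable_pt_lim (fun z => rhoE2 mu Bd B Delta r x1 z) z (pp2 r).
Proof. apply is_derive_Reals. unfold rhoE2, pp2. auto_derive; auto; unfold Rdiv; ring. Qed.

Lemma OmE_form r x1 x2 : QQ r x1 x2 < 1 ->
  OmE1 mu Bd B Delta r x1 x2 = - FF (QQ r x1 x2) *
     (rhoE1 mu Bd B Delta r x1 x2 * pp1 r + rhoE2 mu Bd B Delta r x1 x2 * 0) /\
  OmE2 mu Bd B Delta r x1 x2 = - FF (QQ r x1 x2) *
     (rhoE1 mu Bd B Delta r x1 x2 * pp12 r + rhoE2 mu Bd B Delta r x1 x2 * pp2 r).
Proof.
  intro HQ. split.
  - unfold OmE1. apply deriv_eq. unfold s_std.
    exact (key (fun z => rhoE1 mu Bd B Delta r z x2) (fun z => rhoE2 mu Bd B Delta r z x2)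
             _ _ x1 (d_r1_1 r x2 x1) (d_r2_1 r x2 x1) HQ).
  - unfold OmE2. apply deriv_eq. unfold s_std.
    exact (key (fun z => rhoE1 mu Bd B Delta r x1 z) (fun z => rhoE2 mu Bd B Delta r x1 z)
             _ _ x2 (d_r1_2 r x1 x2) (d_r2_2 r x1 x2) HQ).
Qed.

Lemma hdet_form r x1 x2 : QQ r x1 x2 < 1 ->
  H11 mu Bd B Delta r x1 x2 * H22 mu Bd B Delta r x1 x2
  - H12 mu Bd B Delta r x1 x2 * H21 mu Bd B Delta r x1 x2
  = pp1 r ^ 2 * pp2 r ^ 2 * FF (QQ r x1 x2) * (FF (QQ r x1 x2) + 2 * QQ r x1 x2 * Fd (QQ r x1 x2)).
Proof.
  intro HQ.
  pose proof (hess_gen (fun z => OmE1 mu Bd B Delta r z x2) (fun z => rhoE1 mu Bd B Delta r z x2) (fun z => rhoE2 mu Bd B Delta r z x2)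
      _ _ (pp1 r) 0 x1 (d_r1_1 r x2) (d_r2_1 r x2) (fun z Hz => proj1 (OmE_form r z x2 Hz)) HQ) as E11.
  pose proof (hess_gen (fun z => OmE1 mu Bd B Delta r x1 z) (fun z => rhoE1 mu Bd B Delta r x1 z) (fun z => rhoE2 mu Bd B Delta r x1 z)
      _ _ (pp1 r) 0 x2 (d_r1_2 r x1) (d_r2_2 r x1) (fun z Hz => proj1 (OmE_form r x1 z Hz)) HQ) as E12.
  pose proof (hess_gen (fun z => OmE2 mu Bd B Delta r z x2) (fun z => rhoE1 mu Bd B Delta r z x2) (fun z => rhoE2 mu Bd B Delta r z x2)
      _ _ (pp12 r) (pp2 r) x1 (d_r1_1 r x2) (d_r2_1 r x2) (fun z Hz => proj2 (OmE_form r z x2 Hz)) HQ) as E21.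
  pose proof (hess_gen (fun z => OmE2 mu Bd B Delta r x1 z) (fun z => rhoE1 mu Bd B Delta r x1 z) (fun z => rhoE2 mu Bd B Delta r x1 z)
      _ _ (pp12 r) (pp2 r) x2 (d_r1_2 r x1) (d_r2_2 r x1) (fun z Hz => proj2 (OmE_form r x1 z Hz)) HQ) as E22.
  unfold H11, H12, H21, H22. rewrite E11, E12, E21, E22. unfold QQ. ring.
Qed.

End Model.

Lemma Ome_form y1 y2 : y1 ^ 2 + y2 ^ 2 < 1 ->
  Ome1 y1 y2 = - FF (y1 ^ 2 + y2 ^ 2) * (y1 * 1 + y2 * 0) /\
  Ome2 y1 y2 = - FF (y1 ^ 2 + y2 ^ 2) * (y1 * 0 + y2 * 1).
Proof.
  intro HQ. split.
  - unfold Ome1. apply deriv_eq.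
    exact (key (fun z => z) (fun _ => y2) 1 0 y1 (derivable_pt_lim_id y1) (derivable_pt_lim_const y2 y1) HQ).
  - unfold Ome2. apply deriv_eq.
    exact (key (fun _ => y1) (fun z => z) 0 1 y2 (derivable_pt_lim_const y1 y2) (derivable_pt_lim_id y2) HQ).
Qed.

Lemma hdet_nz mu Bd B Delta r x1 x2 : 0 < mu -> 0 < Bd -> 0 < Delta r -> QQ mu Bd B Delta r x1 x2 < 1 ->
  H11 mu Bd B Delta r x1 x2 * H22 mu Bd B Delta r x1 x2
  - H12 mu Bd B Delta r x1 x2 * H21 mu Bd B Delta r x1 x2 <> 0.
Proof.
  intros Hmu HBd HD HQ. rewrite hdet_form by exact HQ.
  assert (Q0 : 0 <= QQ mu Bd B Delta r x1 x2) by (unfold QQ; nra).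
  rewrite FF_id by (rewrite Rabs_pos_eq; lra).
  pose proof (L6 _ (conj Q0 HQ)).
  assert (mu * Delta r > 0) by (apply Rmult_lt_0_compat; lra).
  assert (pp1 mu Bd Delta r <> 0).
  { unfold pp1. apply Rmult_integral_contrapositive. split; apply Rinv_neq_0_compat; lra. }
  assert (pp2 mu Delta r <> 0). { unfold pp2. apply Rgt_not_eq, Rinv_0_lt_compat. lra. }
  assert (0 < / (1 - QQ mu Bd B Delta r x1 x2)) by (apply Rinv_0_lt_compat; lra).
  apply Rmult_integral_contrapositive; split; [|lra]. apply Rmult_integral_contrapositive; split; [|lra]. apply Rmult_integral_contrapositive; split; apply pow_nonzero; auto.
Qed.

Lemma const_of_deriv0 f : (forall x, derivable_pt_lim f x 0) -> forall r, f r = f 0.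
Proof.
  intros H r. destruct (Rtotal_order r 0) as [Hr|[Hr|Hr]].
  - destruct (MVT_cor2 f (fun _ => 0) r 0 Hr) as [c [Hc _]]; [intros; apply H|lra].
  - now subst.
  - destruct (MVT_cor2 f (fun _ => 0) 0 r Hr) as [c [Hc _]]; [intros; apply H|lra].
Qed.


Lemma smooth_ex f : smooth f -> forall x, ex_derive f x.
Proof.
  intros [D [D0 HD]] x. exists (D 1%nat x). apply is_derive_Reals. rewrite <- D0. apply HD.
Qed.

Lemma FFex y : Rabs y < 1 -> ex_derive (fun x => FF x) y.
Proof. intro H. eexists. apply (FF_der _ H). Qed.

Lemma alg_solve h11 h12 h21 h22 a b : h11 * h22 - h12 * h21 <> 0 ->
  h22 * a - h12 * b = 0 -> - h21 * a + h11 * b = 0 -> a = 0 /\ b = 0.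
Proof.
  intros Hd E1 E2. split.
  - assert (a * (h11 * h22 - h12 * h21) = 0) by (transitivity (h11 * (h22 * a - h12 * b) + h12 * (- h21 * a + h11 * b)); [ring|rewrite E1, E2; ring]).
    apply Rmult_integral in H. destruct H; [auto|contradiction].
  - assert (b * (h11 * h22 - h12 * h21) = 0) by (transitivity (h21 * (h22 * a - h12 * b) + h22 * (- h21 * a + h11 * b)); [ring|rewrite E1, E2; ring]).
    apply Rmult_integral in H. destruct H; [auto|contradiction].
Qed.

Lemma jzero Gam hd X : 0 < Gam -> hd <> 0 -> - Gam * (/ hd * X) = 0 -> X = 0.
Proof.
  intros HG Hd E. apply Rmult_integral in E. destruct E as [E|E]; [lra|].
  apply Rmult_integral in E. destruct E as [E|E]; [|auto].
  exfalso. apply (Rinv_neq_0_compat hd Hd E).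
Qed.

Lemma alg1 mu Bd Dr Br f y1 y2 c1 c2 : 0 < mu -> 0 < Bd -> 0 < Dr ->
  c1 = - f * (y1 * (/ (mu * Dr) * / Bd) + y2 * 0) ->
  c2 = - f * (y1 * (/ (mu * Dr) * (Br / Bd)) + y2 * (/ (mu * Dr))) ->
  - f * (y1 * 1 + y2 * 0) = c1 * (mu * Dr * Bd) /\ - f * (y1 * 0 + y2 * 1) = mu * Dr * (c2 - Br * c1).
Proof. intros Hm HB HD E1 E2. subst. split; field; split; lra. Qed.

Theorem mainTheorem5
  (mu Bd Gam : R) (B Delta : R -> R) (rho1 rho2 : R -> R -> R) (t : R) :
  0 < mu -> 0 < Bd -> 0 < Gam ->
  smooth B -> smooth Delta -> (forall r, 0 < Delta r) ->
  smooth (fun r => rho1 t r) -> smooth (fun r => rho2 t r) ->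
  (forall r, norm2 (re1 mu Bd B Delta rho1 rho2 t r)
                   (re2 mu Bd B Delta rho1 rho2 t r) < 1) ->
  (* dynamics d_t rho_eps = - d_r j_eps, at time t *)
  (forall r, exists d1 d2,
      derivable_pt_lim (j1 mu Bd Gam B Delta rho1 rho2 t) r d1 /\
      derivable_pt_lim (j2 mu Bd Gam B Delta rho1 rho2 t) r d2 /\
      derivable_pt_lim (fun tau => rho1 tau r) t (- d1) /\
      derivable_pt_lim (fun tau => rho2 tau r) t (- d2)) ->
  let J0 := forall r, j1 mu Bd Gam B Delta rho1 rho2 t r = 0 /\
                      j2 mu Bd Gam B Delta rho1 rho2 t r = 0 in
  let Oe1 := Oe1 mu Bd B Delta rho1 rho2 t in
  let Oe2 := Oe2 mu Bd B Delta rho1 rho2 t in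
  (J0 <-> exists c1 c2, forall r,
       OE1 mu Bd B Delta rho1 rho2 t r = c1 /\
       OE2 mu Bd B Delta rho1 rho2 t r = c2) /\
  (J0 ->
     (forall r0 r,
        let Bbar := (B r - B r0) / Bd in
        let Dbar := Delta r / Delta r0 in
        Oe1 r = Oe1 r0 * Dbar /\
        Oe2 r = (Oe2 r0 - Bbar * Oe1 r0) * Dbar) /\
     (forall r,
        let n := norm2 (Oe1 r) (Oe2 r) in
        (n = 0 -> re1 mu Bd B Delta rho1 rho2 t r = 0 /\
                  re2 mu Bd B Delta rho1 rho2 t r = 0) /\
        (n <> 0 -> re1 mu Bd B Delta rho1 rho2 t r = - Oe1 r * tanh n / n /\
                   re2 mu Bd B Delta rho1 rho2 t r = - Oe2 r * tanh n / n)) /\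
     (forall r, derivable_pt_lim (fun tau => rho1 tau r) t 0 /\
                derivable_pt_lim (fun tau => rho2 tau r) t 0) /\
     ((exists c, forall r, Delta r = c) -> exists c, forall r, Oe1 r = c)).
Proof.
  intros Hmu HBd HGam sB sD HDpos s1 s2 Hn Hdyn. cbv zeta.
  assert (HQ : forall r, QQ mu Bd B Delta r (rho1 t r) (rho2 t r) < 1).
  { intro r. specialize (Hn r). unfold norm2, re1, re2 in Hn. unfold QQ.
    destruct (Rlt_or_le (rhoE1 mu Bd B Delta r (rho1 t r) (rho2 t r) ^ 2 +
                         rhoE2 mu Bd B Delta r (rho1 t r) (rho2 t r) ^ 2) 1) as [|Hge]; auto.
    exfalso. apply sqrt_le_1_alt in Hge. rewrite sqrt_1 in Hge. lra. }
  assert (HQ0 : forall r, 0 <= QQ mu Bd B Delta r (rho1 t r) (rho2 t r))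
    by (intro r; unfold QQ; nra).
  assert (OEf : forall r,
    OE1 mu Bd B Delta rho1 rho2 t r = - FF (QQ mu Bd B Delta r (rho1 t r) (rho2 t r)) *
      (re1 mu Bd B Delta rho1 rho2 t r * pp1 mu Bd Delta r + re2 mu Bd B Delta rho1 rho2 t r * 0) /\
    OE2 mu Bd B Delta rho1 rho2 t r = - FF (QQ mu Bd B Delta r (rho1 t r) (rho2 t r)) *
      (re1 mu Bd B Delta rho1 rho2 t r * pp12 mu Bd B Delta r + re2 mu Bd B Delta rho1 rho2 t r * pp2 mu Delta r))
    by (intro r; exact (OmE_form mu Bd B Delta r _ _ (HQ r))).
  assert (Oef : forall r,
    Oe1 mu Bd B Delta rho1 rho2 t r = - FF (QQ mu Bd B Delta r (rho1 t r) (rho2 t r)) *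
      (re1 mu Bd B Delta rho1 rho2 t r * 1 + re2 mu Bd B Delta rho1 rho2 t r * 0) /\
    Oe2 mu Bd B Delta rho1 rho2 t r = - FF (QQ mu Bd B Delta r (rho1 t r) (rho2 t r)) *
      (re1 mu Bd B Delta rho1 rho2 t r * 0 + re2 mu Bd B Delta rho1 rho2 t r * 1))
    by (intro r; exact (Ome_form _ _ (HQ r))).
  pose proof (smooth_ex _ sB) as dB. pose proof (smooth_ex _ sD) as dD.
  pose proof (smooth_ex _ s1) as d1. pose proof (smooth_ex _ s2) as d2.
  assert (exOE : forall r, ex_derive (OE1 mu Bd B Delta rho1 rho2 t) r /\
                           ex_derive (OE2 mu Bd B Delta rho1 rho2 t) r).
  { intro r. assert (mu * Delta r <> 0) by (apply Rgt_not_eq, Rmult_lt_0_compat; auto).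
    pose proof (HQ r) as Hr. pose proof (HQ0 r) as Hr0.
    assert (FQ : ex_derive (fun x => FF x) (QQ mu Bd B Delta r (rho1 t r) (rho2 t r)))
      by (apply FFex; rewrite Rabs_pos_eq; lra).
    split; [eapply ex_derive_ext; [intro z; symmetry; exact (proj1 (OEf z))|]
           |eapply ex_derive_ext; [intro z; symmetry; exact (proj2 (OEf z))|]];
      unfold QQ, re1, re2, rhoE1, rhoE2, pp1, pp12, pp2 in *; auto_derive;
      (repeat split; auto;
       match goal with |- ex_derive _ ?e => 
         replace e with (QQ mu Bd B Delta r (rho1 t r) (rho2 t r)) by (unfold QQ, rhoE1, rhoE2; unfold Rdiv; ring) end; exact FQ). }
  assert (Hdet : forall r, hdet mu Bd B Delta rho1 rho2 t r <> 0).
  { intro r. unfold hdet, h11, h12, h21, h22. apply hdet_nz; auto. }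
  assert (fwd : (forall r, j1 mu Bd Gam B Delta rho1 rho2 t r = 0 /\ j2 mu Bd Gam B Delta rho1 rho2 t r = 0) ->
     exists c1 c2, forall r, OE1 mu Bd B Delta rho1 rho2 t r = c1 /\ OE2 mu Bd B Delta rho1 rho2 t r = c2).
  { intro J.
    assert (D0 : forall r, derivable_pt_lim (OE1 mu Bd B Delta rho1 rho2 t) r 0 /\
                           derivable_pt_lim (OE2 mu Bd B Delta rho1 rho2 t) r 0).
    { intro r. destruct (J r) as [J1 J2]. unfold j1 in J1. unfold j2 in J2.
      apply jzero in J1; [|exact HGam|exact (Hdet r)].
      apply jzero in J2; [|exact HGam|exact (Hdet r)].
      destruct (alg_solve _ _ _ _ _ _ (Hdet r) J1 J2) as [A1 A2].
      destruct (exOE r) as [[l1 L1] [l2 L2]].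
      split.
      - rewrite <- A1. apply deriv_spec. exists l1. now apply is_derive_Reals.
      - rewrite <- A2. apply deriv_spec. exists l2. now apply is_derive_Reals. }
    exists (OE1 mu Bd B Delta rho1 rho2 t 0), (OE2 mu Bd B Delta rho1 rho2 t 0).
    intro r. split; apply const_of_deriv0; intro x; apply (D0 x). }
  assert (bwd : (exists c1 c2, forall r, OE1 mu Bd B Delta rho1 rho2 t r = c1 /\ OE2 mu Bd B Delta rho1 rho2 t r = c2) ->
     (forall r, j1 mu Bd Gam B Delta rho1 rho2 t r = 0 /\ j2 mu Bd Gam B Delta rho1 rho2 t r = 0)).
  { intros [c1 [c2 Hc]] r.
    assert (A1 : deriv (OE1 mu Bd B Delta rho1 rho2 t) r = 0).
    { apply deriv_eq. apply derivable_pt_lim_ext with (f := fct_cte c1).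
      - intro z. unfold fct_cte. symmetry. apply (Hc z).
      - apply derivable_pt_lim_const. }
    assert (A2 : deriv (OE2 mu Bd B Delta rho1 rho2 t) r = 0).
    { apply deriv_eq. apply derivable_pt_lim_ext with (f := fct_cte c2).
      - intro z. unfold fct_cte. symmetry. apply (Hc z).
      - apply derivable_pt_lim_const. }
    unfold j1, j2. rewrite A1, A2. split; ring. }
  split; [split; [exact fwd|exact bwd]|].
  intro J. destruct (fwd J) as [c1 [c2 Hc]].
  assert (OeV : forall r, Oe1 mu Bd B Delta rho1 rho2 t r = c1 * (mu * Delta r * Bd) /\
                          Oe2 mu Bd B Delta rho1 rho2 t r = mu * Delta r * (c2 - B r * c1)).
  { intro r. destruct (OEf r) as [E1 E2]. destruct (Hc r) as [C1 C2].
    rewrite C1 in E1. rewrite C2 in E2. destruct (Oef r) as [F1 F2]. rewrite F1, F2.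
    apply alg1; auto. }
  split; [|split; [|split]].
  - intros r0 r. destruct (OeV r) as [V1 V2]. destruct (OeV r0) as [W1 W2].
    rewrite V1, V2, W1, W2. pose proof (HDpos r0). split; field; lra.
  - intro r. destruct (Oef r) as [F1 F2]. rewrite F1, F2.
    set (y1 := re1 mu Bd B Delta rho1 rho2 t r). set (y2 := re2 mu Bd B Delta rho1 rho2 t r).
    assert (Qeq : QQ mu Bd B Delta r (rho1 t r) (rho2 t r) = y1 ^ 2 + y2 ^ 2) by reflexivity.
    rewrite Qeq. pose proof (HQ r) as Hr. pose proof (HQ0 r) as Hr0. rewrite Qeq in Hr, Hr0.
    set (p := sqrt (y1 ^ 2 + y2 ^ 2)).
    assert (Hp : 0 <= p < 1).
    { split. apply sqrt_pos. unfold p. rewrite <- sqrt_1. apply sqrt_lt_1; lra. }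
    assert (Hpq : p ^ 2 = y1 ^ 2 + y2 ^ 2) by (unfold p; apply pow2_sqrt; lra).
    set (f := FF (y1 ^ 2 + y2 ^ 2)).
    assert (Hf : 0 < f) by (apply L6; lra).
    assert (Hnorm : norm2 (- f * (y1 * 1 + y2 * 0)) (- f * (y1 * 0 + y2 * 1)) = f * p).
    { unfold norm2. replace ((- f * (y1 * 1 + y2 * 0)) ^ 2 + (- f * (y1 * 0 + y2 * 1)) ^ 2)
        with (f ^ 2 * (y1 ^ 2 + y2 ^ 2)) by ring.
      rewrite sqrt_mult by nra. rewrite sqrt_pow2 by lra. reflexivity. }
    rewrite Hnorm. split.
    + intro E. assert (p = 0) by nra. assert (y1 ^ 2 + y2 ^ 2 = 0) by nra. split; nra.
    + intro E. assert (p <> 0) by (intro; apply E; subst; nra).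
      assert (T : tanh (f * p) = p).
      { unfold f. rewrite <- Hpq. rewrite Rmult_comm, L4 by lra. apply tanh_artanh. lra. }
      rewrite T. split; field; lra.
  - intro r. destruct (Hdyn r) as [e1 [e2 [Hj1 [Hj2 [Hr1 Hr2]]]]].
    assert (Z1 : e1 = 0).
    { eapply uniqueness_limite; [exact Hj1|].
      apply derivable_pt_lim_ext with (f := fct_cte 0).
      - intro z. unfold fct_cte. symmetry. apply (J z).
      - apply derivable_pt_lim_const. }
    assert (Z2 : e2 = 0).
    { eapply uniqueness_limite; [exact Hj2|].
      apply derivable_pt_lim_ext with (f := fct_cte 0).
      - intro z. unfold fct_cte. symmetry. apply (J z).
      - apply derivable_pt_lim_const. }
    rewrite Z1, Ropp_0 in Hr1. rewrite Z2, Ropp_0 in Hr2. split; assumption.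
  - intros [c Hcst]. exists (Oe1 mu Bd B Delta rho1 rho2 t 0). intro r.
    destruct (OeV r) as [V1 _]. destruct (OeV 0) as [W1 _]. rewrite V1, W1, !Hcst.
    pose proof (HDpos 0). rewrite Hcst in H. field.
Qed.
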